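(* Let $(G,* )$ be a metrizable topological group. The following are equivalent: (1) $G$ has the property ${\sf S}_c(\mathcal{O}_{\sf nbd},\mathcal{O})$; (2) $G$ has the Haver property with respect to every left-invariant metric on $G$ that is compatible with (generates) the topology of $G$.
   Context: For a topological group $(G,* )$ with identity $e$ and a neighborhood $U$ of $e$, let $\mathcal{O}(U)=\{x*U: x\in G\}$, an open cover of $G$, and $\mathcal{O}_{\sf nbd}=\{\mathcal{O}(U): U \text{ a neighborhood of } e\}$. $\mathcal{O}$ denotes the collection of all open covers of $G$. A family $\mathcal{B}$ refines a family $\mathcal{A}$ if every member of $\mathcal{B}$ is contained in some member of $\mathcal{A}$. For collections $\mathcal{A},\mathcal{B}$ of families of subsets of $G$, ${\sf S}_c(\mathcal{A},\mathcal{B})$ is the statement: for each sequence $(A_n:n<\infty)$ of elements of $\mathcal{A}$ there is a sequence $(B_n:n<\infty)$ such that each $B_n$ is a pairwise disjoint family of open sets refining $A_n$ and $\bigcup_{n<\infty}B_n\in\mathcal{B}$. A metrizable space $X$ is Haver with respect to a metric $d$ if for each sequence $(\epsilon_n:n<\infty)$ of positive reals there is a sequence $(\mathcal{V}_n:n<\infty)$ where each $\mathcal{V}_n$ is a pairwise disjoint family of open sets each of $d$-diameter less than $\epsilon_n$, such that $\bigcup_{n<\infty}\mathcal{V}_n$ covers $X$. A metric $d$ on $G$ is left-invariant if $d(g*x,g*y)=d(x,y)$ for all $g,x,y\in G$. *)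

(* Defs.v *)
From Stdlib Require Import Reals.
Open Scope R_scope.

Definition is_topology {G : Type} (opn : (G -> Prop) -> Prop) : Prop :=
  opn (fun _ => True) /\
  (forall A B, opn A -> opn B -> opn (fun x => A x /\ B x)) /\
  (forall F : (G -> Prop) -> Prop,
      (forall A, F A -> opn A) -> opn (fun x => exists A, F A /\ A x)).

Definition is_group {G : Type} (op : G -> G -> G) (e : G) (inv : G -> G) : Prop :=
  (forall x y z, op (op x y) z = op x (op y z)) /\
  (forall x, op e x = x) /\ (forall x, op x e = x) /\
  (forall x, op (inv x) x = e) /\ (forall x, op x (inv x) = e).

Definition is_topological_group {G : Type} (opn : (G -> Prop) -> Prop)
  (op : G -> G -> G) (e : G) (inv : G -> G) : Prop :=
  is_topology opn /\ is_group op e inv /\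
  (forall W x y, opn W -> W (op x y) ->
     exists U V, opn U /\ opn V /\ U x /\ V y /\
       (forall a b, U a -> V b -> W (op a b))) /\
  (forall W, opn W -> opn (fun x => W (inv x))).

Definition is_metric {G : Type} (d : G -> G -> R) : Prop :=
  (forall x y, 0 <= d x y) /\
  (forall x y, d x y = 0 <-> x = y) /\
  (forall x y, d x y = d y x) /\
  (forall x y z, d x z <= d x y + d y z).

Definition metric_compatible {G : Type} (d : G -> G -> R) (opn : (G -> Prop) -> Prop) : Prop :=
  forall U, opn U <-> (forall x, U x -> exists r, 0 < r /\ forall y, d x y < r -> U y).

Definition metrizable {G : Type} (opn : (G -> Prop) -> Prop) : Prop :=
  exists d : G -> G -> R, is_metric d /\ metric_compatible d opn.

Definition left_invariant {G : Type} (op : G -> G -> G) (d : G -> G -> R) : Prop :=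
  forall g x y, d (op g x) (op g y) = d x y.

Definition ltrans {G : Type} (op : G -> G -> G) (x : G) (U : G -> Prop) : G -> Prop :=
  fun z => exists u, U u /\ z = op x u.

Definition disjoint_open_family {G : Type} (opn : (G -> Prop) -> Prop)
  (B : (G -> Prop) -> Prop) : Prop :=
  (forall A, B A -> opn A) /\
  (forall A A', B A -> B A' -> (exists z, A z /\ A' z) -> forall y, A y <-> A' y).

Definition refines {G : Type} (B A : (G -> Prop) -> Prop) : Prop :=
  forall V, B V -> exists W, A W /\ (forall z, V z -> W z).

Definition union_covers {G : Type} (Bs : nat -> (G -> Prop) -> Prop) : Prop :=
  forall x, exists n V, Bs n V /\ V x.

Definition cover_of_nbd {G : Type} (op : G -> G -> G) (U : G -> Prop) : (G -> Prop) -> Prop :=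
  fun W => exists x, W = ltrans op x U.

(** S_c(O_nbd, O): neighborhoods of e are open sets containing e. *)
Definition Sc_Onbd_O {G : Type} (opn : (G -> Prop) -> Prop) (op : G -> G -> G) (e : G) : Prop :=
  forall U : nat -> G -> Prop,
    (forall n, opn (U n) /\ U n e) ->
    exists Bs : nat -> (G -> Prop) -> Prop,
      (forall n, disjoint_open_family opn (Bs n) /\ refines (Bs n) (cover_of_nbd op (U n))) /\
      union_covers Bs.

Definition diam_lt {G : Type} (d : G -> G -> R) (A : G -> Prop) (eps : R) : Prop :=
  exists r, r < eps /\ forall x y, A x -> A y -> d x y <= r.

Definition Haver {G : Type} (opn : (G -> Prop) -> Prop) (d : G -> G -> R) : Prop :=
  forall eps : nat -> R, (forall n, 0 < eps n) ->
    exists Vs : nat -> (G -> Prop) -> Prop,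
      (forall n, disjoint_open_family opn (Vs n) /\
                 (forall V, Vs n V -> diam_lt d V (eps n))) /\
      union_covers Vs.

(* Main.v *)
Require Import Defs.
From Stdlib Require Import Reals Lra Lia List Classical ClassicalEpsilon.
Open Scope R_scope.



Lemma g_inv_uniq {G op e inv} (Hg : @is_group G op e inv) a b : op a b = e -> b = inv a.
Proof.
  destruct Hg as (As & Le & Re & Li & Ri). intros H.
  rewrite <- (Le b), <- (Li a), As, H, Re. reflexivity.
Qed.

Lemma g_invK {G op e inv} (Hg : @is_group G op e inv) x : inv (inv x) = x.
Proof.
  symmetry. apply (g_inv_uniq Hg). destruct Hg as (As & Le & Re & Li & Ri). apply Li.
Qed.

Lemma g_inve {G op e inv} (Hg : @is_group G op e inv) : inv e = e.
Proof.
  symmetry. apply (g_inv_uniq Hg). destruct Hg as (As & Le & Re & Li & Ri). apply Le.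
Qed.

Lemma g_invM {G op e inv} (Hg : @is_group G op e inv) x y : inv (op x y) = op (inv y) (inv x).
Proof.
  symmetry. apply (g_inv_uniq Hg). pose proof Hg as Hg'.
  destruct Hg' as (As & Le & Re & Li & Ri).
  rewrite As, <- (As y), Ri, Le, Ri. reflexivity.
Qed.

Lemma g_cancel_l {G op e inv} (Hg : @is_group G op e inv) x y : op (inv x) (op x y) = y.
Proof. destruct Hg as (As & Le & Re & Li & Ri). rewrite <- As, Li, Le. reflexivity. Qed.

Lemma g_cancel_r {G op e inv} (Hg : @is_group G op e inv) x y : op x (op (inv x) y) = y.
Proof. destruct Hg as (As & Le & Re & Li & Ri). rewrite <- As, Ri, Le. reflexivity. Qed.

Definition cprod {G} (op : G -> G -> G) (e : G) (l : list (nat * G)) : G :=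
  fold_right (fun p acc => op (snd p) acc) e l.
Definition csum {G} (l : list (nat * G)) : R :=
  fold_right (fun p acc => (/2) ^ (fst p) + acc) 0 l.
Definition cvalid {G} (V : nat -> G -> Prop) (l : list (nat * G)) : Prop :=
  Forall (fun p => V (fst p) (snd p)) l.

Lemma cprod_app {G op e inv} (Hg : @is_group G op e inv) l1 l2 :
  cprod op e (l1 ++ l2) = op (cprod op e l1) (cprod op e l2).
Proof.
  destruct Hg as (As & Le & Re & Li & Ri).
  induction l1 as [|p l1 IH]; simpl.
  - rewrite Le; reflexivity.
  - rewrite IH, As. reflexivity.
Qed.

Lemma csum_app {G} (l1 l2 : list (nat * G)) : csum (l1 ++ l2) = csum l1 + csum l2.
Proof. induction l1 as [|p l1 IH]; simpl; [lra|]. unfold csum in *. simpl. rewrite IH. lra. Qed.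

Lemma half_pow_pos n : 0 < (/2) ^ n.
Proof. apply pow_lt. lra. Qed.

Lemma csum_nonneg {G} (l : list (nat * G)) : 0 <= csum l.
Proof.
  induction l as [|p l IH]; unfold csum in *; simpl; [lra|].
  pose proof (half_pow_pos (fst p)). lra.
Qed.

Lemma half_pow_anti n m : (n <= m)%nat -> (/2) ^ m <= (/2) ^ n.
Proof.
  induction 1; [lra|]. simpl. pose proof (half_pow_pos m). lra.
Qed.

Lemma half_pow_ge n m : (/2) ^ n <= (/2) ^ m -> (m <= n)%nat.
Proof.
  intros H. destruct (Nat.le_gt_cases m n) as [h|h]; auto.
  exfalso. assert (S n <= m)%nat as h2 by exact h.
  pose proof (half_pow_anti _ _ h2). simpl in H0.
  pose proof (half_pow_pos n). lra.
Qed.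

Lemma csum_split {G} (l : list (nat * G)) t :
  0 <= t -> t < csum l ->
  exists l1 p l2, l = l1 ++ p :: l2 /\ csum l1 <= t /\ t < csum l1 + (/2) ^ (fst p).
Proof.
  revert t. induction l as [|p l IH]; intros t Ht Hl.
  - unfold csum in Hl; simpl in Hl. lra.
  - destruct (Rlt_le_dec t ((/2) ^ (fst p))) as [h|h].
    + exists nil, p, l. unfold csum; simpl. split; [reflexivity|]. lra.
    + destruct (IH (t - (/2) ^ (fst p))) as (l1 & q & l2 & E & H1 & H2).
      * lra.
      * unfold csum in Hl |- *; simpl in Hl. lra.
      * exists (p :: l1), q, l2. simpl. rewrite E. split; [reflexivity|].
        unfold csum in *; simpl. lra.
Qed.

Lemma kelley {G op e inv} (Hg : @is_group G op e inv) (V : nat -> G -> Prop)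
  (Ve : forall n, V n e)
  (Vdec : forall n z, V (S n) z -> V n z)
  (Vcube : forall n a b c, V (S n) a -> V (S n) b -> V (S n) c -> V n (op a (op b c))) :
  forall k l, (length l <= k)%nat -> cvalid V l ->
  forall m, csum l <= (/2) ^ (S m) -> V m (cprod op e l).
Proof.
  induction k as [|k IH]; intros l Hlen Hv m Hs.
  - destruct l; [apply Ve| simpl in Hlen; lia].
  - destruct l as [|p0 l0] eqn:El.
    + apply Ve.
    + rewrite <- El in *.
      assert (Hpos : 0 < csum l).
      { subst l. unfold csum; simpl. pose proof (half_pow_pos (fst p0)).
        pose proof (csum_nonneg l0). unfold csum in H0. lra. }
      destruct (csum_split l (csum l / 2)) as (l1 & p & l2 & E & H1 & H2); [lra|lra|].
      assert (Hsum : csum l = csum l1 + ((/2) ^ (fst p) + csum l2)).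
      { rewrite E, csum_app. reflexivity. }
      rewrite E, (cprod_app Hg). simpl.
      rewrite E in Hlen. rewrite length_app in Hlen. simpl in Hlen.
      rewrite E in Hv. unfold cvalid in Hv. apply Forall_app in Hv. destruct Hv as [Hv1 Hv2].
      inversion Hv2; subst.
      pose proof (csum_nonneg l1). pose proof (csum_nonneg l2).
      pose proof (half_pow_pos (fst p)).
      apply Vcube.
      * apply (IH l1); [lia|exact Hv1|]. cbn [pow] in Hs |- *. lra.
      * assert (hm : (S m <= fst p)%nat).
        { apply half_pow_ge. lra. }
        clear -hm H3 Vdec. induction hm; auto.
      * apply (IH l2); [lia|exact H4|]. cbn [pow] in Hs |- *. lra.
Qed.

Definition chainset {G} (op : G -> G -> G) (e : G) (V : nat -> G -> Prop) (z : G) (s : R) : Prop :=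
  exists l, cvalid V l /\ cprod op e l = z /\ s = csum l.
Definition isglb (E : R -> Prop) (g : R) : Prop :=
  (forall s, E s -> g <= s) /\ (forall g', (forall s, E s -> g' <= s) -> g' <= g).
Definition Dfun {G} (op : G -> G -> G) (e : G) (V : nat -> G -> Prop) (z : G) : R :=
  epsilon (inhabits 0) (isglb (chainset op e V z)).

Lemma glb_ex (E : R -> Prop) : (exists s, E s) -> (forall s, E s -> 0 <= s) -> exists g, isglb E g.
Proof.
  intros [s0 Hs0] Hpos.
  destruct (completeness (fun x => E (- x))) as [m [Hm1 Hm2]].
  - exists 0. intros x Hx. apply Hpos in Hx. lra.
  - exists (- s0). rewrite Ropp_involutive. exact Hs0.
  - exists (- m). split.
    + intros s Hs. assert (- s <= m). { apply Hm1. rewrite Ropp_involutive. exact Hs. } lra.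
    + intros g' Hg'. assert (m <= - g'). { apply Hm2. intros x Hx. apply Hg' in Hx. lra. } lra.
Qed.


Lemma D_spec {G op e inv} (Hg : @is_group G op e inv) (V : nat -> G -> Prop) (V0 : forall z, V 0%nat z) z :
  isglb (chainset op e V z) (Dfun op e V z).
Proof.
  unfold Dfun. apply epsilon_spec. apply glb_ex.
  - exists (csum ((0%nat, z) :: nil)). exists ((0%nat, z) :: nil). split; [|split].
    + constructor; [apply V0|constructor].
    + unfold cprod. simpl. destruct Hg as (As & Le & Re & Li & Ri). apply Re.
    + reflexivity.
  - intros s (l & _ & _ & ->). apply csum_nonneg.
Qed.

Lemma D_le {G op e inv} (Hg : @is_group G op e inv) V (V0 : forall z, V 0%nat z) l :
  cvalid V l -> Dfun op e V (cprod op e l) <= csum l.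
Proof.
  intros Hv. apply (proj1 (D_spec Hg V V0 _)). exists l. auto.
Qed.

Lemma D_nonneg {G op e inv} (Hg : @is_group G op e inv) V (V0 : forall z, V 0%nat z) z :
  0 <= Dfun op e V z.
Proof.
  apply (proj2 (D_spec Hg V V0 _)). intros s (l & _ & _ & ->). apply csum_nonneg.
Qed.

Lemma D_approx {G op e inv} (Hg : @is_group G op e inv) V (V0 : forall z, V 0%nat z) z eps :
  0 < eps -> exists l, cvalid V l /\ cprod op e l = z /\ csum l < Dfun op e V z + eps.
Proof.
  intros He. apply NNPP. intros Hn.
  assert (Dfun op e V z + eps <= Dfun op e V z); [|lra].
  apply (proj2 (D_spec Hg V V0 _)). intros s (l & Hv & Hp & ->).
  apply Rnot_lt_le. intros Hlt. apply Hn. exists l. auto.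
Qed.

Lemma D_e {G op e inv} (Hg : @is_group G op e inv) V (V0 : forall z, V 0%nat z) :
  Dfun op e V e = 0.
Proof.
  pose proof (D_le Hg V V0 nil (Forall_nil _)). pose proof (D_nonneg Hg V V0 e).
  unfold cprod, csum in H; simpl in H. lra.
Qed.

Lemma D_single {G op e inv} (Hg : @is_group G op e inv) V (V0 : forall z, V 0%nat z) n z :
  V n z -> Dfun op e V z <= (/2) ^ n.
Proof.
  intros Hz. pose proof (D_le Hg V V0 ((n, z) :: nil)).
  unfold cprod, csum in H; simpl in H. destruct Hg as (As & Le & Re & Li & Ri).
  rewrite Re in H. rewrite Rplus_0_r in H. apply H. constructor; [exact Hz|constructor].
Qed.

Lemma D_mul {G op e inv} (Hg : @is_group G op e inv) V (V0 : forall z, V 0%nat z) a b :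
  Dfun op e V (op a b) <= Dfun op e V a + Dfun op e V b.
Proof.
  apply Rnot_lt_le. intros Hlt.
  set (eps := (Dfun op e V (op a b) - Dfun op e V a - Dfun op e V b) / 2).
  assert (0 < eps) by (unfold eps; lra).
  destruct (D_approx Hg V V0 a eps H) as (la & Hva & Hpa & Hsa).
  destruct (D_approx Hg V V0 b eps H) as (lb & Hvb & Hpb & Hsb).
  pose proof (D_le Hg V V0 (la ++ lb)).
  rewrite (cprod_app Hg), csum_app, Hpa, Hpb in H0.
  assert (cvalid V (la ++ lb)) by (apply Forall_app; auto).
  apply H0 in H1. unfold eps in *. lra.
Qed.

Fixpoint revinv {G} (inv : G -> G) (l : list (nat * G)) : list (nat * G) :=
  match l with
  | nil => nil
  | p :: l' => revinv inv l' ++ (fst p, inv (snd p)) :: nil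
  end.

Lemma revinv_prod {G op e inv} (Hg : @is_group G op e inv) l :
  cprod op e (revinv inv l) = inv (cprod op e l).
Proof.
  induction l as [|p l IH]; simpl.
  - unfold cprod; simpl. symmetry. apply (g_inve Hg).
  - rewrite (cprod_app Hg), IH. unfold cprod at 2. simpl.
    rewrite (g_invM Hg). destruct Hg as (As & Le & Re & Li & Ri). rewrite Re. reflexivity.
Qed.

Lemma revinv_sum {G} (inv : G -> G) l : csum (revinv inv l) = csum l.
Proof.
  induction l as [|p l IH]; simpl; [reflexivity|].
  rewrite csum_app, IH. unfold csum; simpl. lra.
Qed.

Lemma revinv_valid {G} (inv : G -> G) V (Vsym : forall n x, V n x -> V n (inv x)) l :
  cvalid V l -> cvalid V (revinv inv l).
Proof.
  induction 1; simpl; [constructor|].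
  apply Forall_app. split; auto. constructor; [apply Vsym; auto|constructor].
Qed.

Lemma D_inv_le {G op e inv} (Hg : @is_group G op e inv) V (V0 : forall z, V 0%nat z)
  (Vsym : forall n x, V n x -> V n (inv x)) z :
  Dfun op e V (inv z) <= Dfun op e V z.
Proof.
  apply (proj2 (D_spec Hg V V0 _)). intros s (l & Hv & Hp & ->).
  rewrite <- (revinv_sum inv l), <- Hp, <- (revinv_prod Hg).
  apply (D_le Hg); auto. apply revinv_valid; auto.
Qed.

Lemma D_inv {G op e inv} (Hg : @is_group G op e inv) V (V0 : forall z, V 0%nat z)
  (Vsym : forall n x, V n x -> V n (inv x)) z :
  Dfun op e V (inv z) = Dfun op e V z.
Proof.
  apply Rle_antisym; [apply D_inv_le; auto|].
  rewrite <- (g_invK Hg z) at 1. apply D_inv_le; auto.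
Qed.

Lemma D_small {G op e inv} (Hg : @is_group G op e inv) V (V0 : forall z, V 0%nat z)
  (Ve : forall n, V n e)
  (Vdec : forall n z, V (S n) z -> V n z)
  (Vcube : forall n a b c, V (S n) a -> V (S n) b -> V (S n) c -> V n (op a (op b c))) m z :
  Dfun op e V z < (/2) ^ (S m) -> V m z.
Proof.
  intros H. destruct (D_approx Hg V V0 z ((/2)^(S m) - Dfun op e V z)) as (l & Hv & Hp & Hs); [lra|].
  rewrite <- Hp. apply (kelley Hg V Ve Vdec Vcube (length l) l (le_n _) Hv). lra.
Qed.

Definition step_good {G} (opn : (G -> Prop) -> Prop) (op : G -> G -> G) (e : G) (inv : G -> G)
  (W S : G -> Prop) : Prop :=
  opn S /\ S e /\ (forall x, S x -> S (inv x)) /\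
  (forall a b c, S a -> S b -> S c -> W (op a (op b c))).

Lemma step_ex {G opn op e inv} (Ht : @is_topological_group G opn op e inv) W :
  opn W -> W e -> exists S, step_good opn op e inv W S.
Proof.
  intros HW HWe. destruct Ht as (Htop & Hg & Hc & Hi).
  destruct Htop as (HT & HI & HU).
  pose proof Hg as Hg'. destruct Hg' as (As & Le & Re & Li & Ri).
  destruct (Hc W e e HW) as (U1 & V1 & HU1 & HV1 & U1e & V1e & H1); [rewrite Le; exact HWe|].
  destruct (Hc (fun x => U1 x /\ V1 x) e e) as (U2 & V2 & HU2 & HV2 & U2e & V2e & H2);
    [apply HI; auto| rewrite Le; auto|].
  set (T := fun x => U1 x /\ U2 x /\ V2 x).
  assert (HTo : opn T) by (unfold T; apply HI; auto).
  exists (fun x => T x /\ T (inv x)). split; [|split; [|split]].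
  - apply HI; auto.
  - rewrite (g_inve Hg). unfold T; auto.
  - intros x [h1 h2]. rewrite (g_invK Hg). auto.
  - intros a b c [[ha _] _] [[_ [hb _]] _] [[_ [_ hc]] _].
    apply H1; auto. apply (H2 b c hb hc).
Qed.

Lemma ball_open {G} (opn : (G -> Prop) -> Prop) (d0 : G -> G -> R) x r :
  is_metric d0 -> metric_compatible d0 opn -> opn (fun z => d0 x z < r).
Proof.
  intros (Hp & Hz & Hs & Htr) Hc. apply Hc. intros y Hy.
  exists (r - d0 x y). split; [lra|]. intros w Hw. pose proof (Htr x y w). lra.
Qed.

Fixpoint Vseq {G} (opn : (G -> Prop) -> Prop) (op : G -> G -> G) (e : G) (inv : G -> G)
  (d0 : G -> G -> R) (n : nat) : G -> Prop :=
  match n with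
  | O => fun _ => True
  | S n => epsilon (inhabits (fun _ : G => True))
             (step_good opn op e inv (fun z => Vseq opn op e inv d0 n z /\ d0 e z < (/2) ^ n))
  end.

Lemma Vseq_props {G opn op e inv} (Ht : @is_topological_group G opn op e inv) d0 :
  is_metric d0 -> metric_compatible d0 opn ->
  forall n, opn (Vseq opn op e inv d0 n) /\ Vseq opn op e inv d0 n e /\
    step_good opn op e inv (fun z => Vseq opn op e inv d0 n z /\ d0 e z < (/2) ^ n)
      (Vseq opn op e inv d0 (S n)).
Proof.
  intros Hm Hc.
  assert (Hstep : forall n, opn (Vseq opn op e inv d0 n) -> Vseq opn op e inv d0 n e ->
    step_good opn op e inv (fun z => Vseq opn op e inv d0 n z /\ d0 e z < (/2) ^ n)
      (Vseq opn op e inv d0 (S n))).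
  { intros n Ho He. simpl. apply epsilon_spec. apply (step_ex Ht).
    - destruct Ht as ((HT & HI & HU) & _). apply HI; auto. apply ball_open; auto.
    - split; auto. destruct Hm as (Hp & Hz & _). rewrite (proj2 (Hz e e) eq_refl).
      apply half_pow_pos. }
  induction n as [|n IH].
  - assert (H0 : opn (Vseq opn op e inv d0 0)) by (destruct Ht as ((HT & HI & HU) & _); exact HT).
    assert (H1 : Vseq opn op e inv d0 0 e) by exact I.
    split; [exact H0|split; [exact H1|]]. apply (Hstep 0%nat); auto.
  - destruct IH as (Ho & He & Hs). destruct Hs as (Ho' & He' & _).
    split; [exact Ho'|split; [exact He'|]]. apply Hstep; auto.
Qed.

Lemma half_pow_small r : 0 < r -> exists n, (/2) ^ n < r.
Proof.
  intros Hr. destruct (pow_lt_1_zero (/2)) with (y := r) as [N HN]; auto.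
  - rewrite Rabs_pos_eq; lra.
  - exists N. specialize (HN N (le_n _)). rewrite Rabs_pos_eq in HN; auto.
    left; apply half_pow_pos.
Qed.

Lemma BK {G opn op e inv} (Ht : @is_topological_group G opn op e inv) d0 :
  is_metric d0 -> metric_compatible d0 opn ->
  exists d, is_metric d /\ left_invariant op d /\ metric_compatible d opn.
Proof.
  intros Hm Hc.
  pose proof (Vseq_props Ht d0 Hm Hc) as Hp.
  pose proof Ht as Ht'. destruct Ht' as (Htop & Hg & Hcont & Hinv).
  pose proof Hg as Hg'. destruct Hg' as (As & Le & Re & Li & Ri).
  set (V := Vseq opn op e inv d0).
  assert (V0 : forall z, V 0%nat z) by (intros; exact I).
  assert (Vo : forall n, opn (V n)) by (intros; apply Hp).
  assert (Ve : forall n, V n e) by (intros; apply Hp).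
  assert (Vsym : forall n x, V n x -> V n (inv x)).
  { intros [|n] x; [intros; exact I|]. apply (Hp n). }
  assert (Vcube' : forall n a b c, V (S n) a -> V (S n) b -> V (S n) c ->
             V n (op a (op b c)) /\ d0 e (op a (op b c)) < (/2) ^ n).
  { intros n. apply (Hp n). }
  assert (Vcube : forall n a b c, V (S n) a -> V (S n) b -> V (S n) c -> V n (op a (op b c)))
    by (intros; apply Vcube'; auto).
  assert (Vdec : forall n z, V (S n) z -> V n z).
  { intros n z Hz. replace z with (op z (op e e)) by (rewrite Re, Re; reflexivity). apply Vcube; auto. }
  assert (Vball : forall n z, V (S n) z -> d0 e z < (/2) ^ n).
  { intros n z Hz. replace z with (op z (op e e)) by (rewrite Re, Re; reflexivity). apply Vcube'; auto. }
  set (D := Dfun op e V).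
  assert (Dsmall : forall m z, D z < (/2) ^ (S m) -> V m z)
    by (intros; apply (D_small Hg V V0 Ve Vdec Vcube); auto).
  assert (Dz : forall z, D z = 0 -> z = e).
  { intros z Hz. destruct Hm as (Hpos & Hzero & Hsym & Htr).
    destruct (Rle_lt_or_eq_dec 0 (d0 e z) (Hpos e z)) as [h|h].
    - exfalso. destruct (half_pow_small _ h) as [n Hn].
      assert (V (S n) z). { apply Dsmall. rewrite Hz. apply half_pow_pos. }
      apply Vball in H. lra.
    - symmetry. apply Hzero. auto. }
  exists (fun x y => D (op (inv x) y)). split; [|split].
  - split; [|split; [|split]].
    + intros; apply (D_nonneg Hg V V0).
    + intros x y. split.
      * intros H. apply Dz in H. rewrite <- (g_cancel_r Hg x y), H, Re. reflexivity.
      * intros ->. rewrite Li. apply (D_e Hg V V0).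
    + intros x y. rewrite <- (D_inv Hg V V0 Vsym), (g_invM Hg), (g_invK Hg). reflexivity.
    + intros x y z. pose proof (D_mul Hg V V0 (op (inv x) y) (op (inv y) z)).
      rewrite As, (g_cancel_r Hg) in H. exact H.
  - intros g x y. rewrite (g_invM Hg), As, (g_cancel_l Hg). reflexivity.
  - intros U. split.
    + intros HU x Ux.
      destruct (Hcont U x e HU) as (A & B & HA & HB & Ax & Be & HAB); [rewrite Re; auto|].
      destruct (proj1 (Hc B) HB e Be) as (r0 & Hr0 & Hball).
      destruct (half_pow_small r0 Hr0) as [n Hn].
      exists ((/2) ^ (S (S n))). split; [apply half_pow_pos|].
      intros y Hy. rewrite <- (g_cancel_r Hg x y). apply HAB; auto.
      apply Hball. apply Dsmall in Hy. apply Vball in Hy. lra.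
    + intros HU. apply Hc. intros x Ux.
      destruct (HU x Ux) as (r & Hr & Hball).
      destruct (half_pow_small r Hr) as [n Hn].
      destruct (Hcont (V n) (inv x) x (Vo n)) as (A & B & HA & HB & Ax & Bx & HAB);
        [rewrite Li; auto|].
      destruct (proj1 (Hc B) HB x Bx) as (r0 & Hr0 & Hb0).
      exists r0. split; auto. intros y Hy. apply Hball.
      pose proof (D_single Hg V V0 n (op (inv x) y) (HAB _ _ Ax (Hb0 y Hy))).
      unfold D. lra.
Qed.

Theorem theorem2p2 (G : Type) (opn : (G -> Prop) -> Prop)
  (op : G -> G -> G) (e : G) (inv : G -> G) :
  is_topological_group opn op e inv ->
  metrizable opn ->
  (Sc_Onbd_O opn op e <->
   (forall d : G -> G -> R, is_metric d -> left_invariant op d ->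
      metric_compatible d opn -> Haver opn d)).
Proof.
  intros Ht [d0 [Hm0 Hc0]].
  pose proof Ht as Ht'. destruct Ht' as (Htop & Hg & Hcont & Hinv).
  pose proof Hg as Hg'. destruct Hg' as (As & Le & Re & Li & Ri).
  split.
  - intros HS d Hm Hli Hc eps Heps.
    destruct Hm as (Hpos & Hzero & Hsym & Htr).
    destruct (HS (fun n z => d e z < eps n / 3)) as (Bs & HB & Hcov).
    + intros n. split.
      * apply Hc. intros x Hx. exists (eps n / 3 - d e x). split; [lra|].
        intros y Hy. pose proof (Htr e x y). lra.
      * rewrite (proj2 (Hzero e e) eq_refl). specialize (Heps n). lra.
    + exists Bs. split; [|exact Hcov]. intros n. destruct (HB n) as [Hd Hr]. split; [exact Hd|].
      intros V HV. destruct (Hr V HV) as (W & [x ->] & HVW).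
      exists (2 * eps n / 3). split; [specialize (Heps n); lra|].
      intros a b Ha Hb. apply HVW in Ha. apply HVW in Hb.
      destruct Ha as (u & Hu & ->). destruct Hb as (v & Hv & ->).
      pose proof (Htr (op x u) x (op x v)).
      assert (d (op x u) x = d e u).
      { rewrite Hsym, <- (Re x) at 1. rewrite Hli. reflexivity. }
      assert (d x (op x v) = d e v).
      { rewrite <- (Re x) at 1. rewrite Hli. reflexivity. }
      lra.
  - intros HH.
    destruct (BK Ht d0 Hm0 Hc0) as (d & Hm & Hli & Hc).
    intros U HU.
    assert (Hr : forall n, {r | 0 < r /\ forall y, d e y < r -> U n y}).
    { intros n. apply constructive_indefinite_description.
      destruct (HU n) as [Ho He]. destruct (proj1 (Hc (U n)) Ho e He) as (r & Hr & Hb).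
      exists r. auto. }
    destruct (HH d Hm Hli Hc (fun n => proj1_sig (Hr n))) as (Vs & HV & Hcov).
    + intros n. apply (proj2_sig (Hr n)).
    + exists Vs. split; [|exact Hcov]. intros n. destruct (HV n) as [Hd Hdiam].
      split; [exact Hd|]. intros A HA.
      destruct (classic (exists v, A v)) as [[v Av]|Hne].
      * exists (ltrans op v (U n)). split; [exists v; reflexivity|].
        intros z Az. exists (op (inv v) z). split; [|symmetry; apply (g_cancel_r Hg)].
        destruct (proj2_sig (Hr n)) as [_ Hb]. apply Hb.
        destruct (Hdiam A HA) as (r & Hrl & Hrb). specialize (Hrb v z Av Az).
        replace (d e (op (inv v) z)) with (d v z) by (rewrite <- (Li v), Hli; reflexivity).
        simpl in Hrl. lra.
      * exists (ltrans op e (U n)). split; [exists e; reflexivity|].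
        intros z Az. exfalso. apply Hne. exists z; exact Az.
Qed.
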